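(* Let $\mathcal{G}$ be the information-flow graph of a single-sender single-uniprior index-coding instance with message lengths $q_1,\dots,q_n$. Then \[ \ell^*(\mathcal{G}) \geq \sum_{i:\ i \text{ is a predecessor of some vertex in } \mathcal{L}(\mathcal{G})} q_i . \]
   Context: Single-sender single-uniprior index coding: there are $n$ receivers and $n$ independent messages $x_1,\dots,x_n$; message $x_i$ consists of $q_i\ge 1$ bits, each independently uniformly distributed on $\{0,1\}$. A single sender knows all messages. Receiver $i$ knows $x_i$ a priori and requests a set $\mathcal{W}_i$ of messages with $x_i\notin\mathcal{W}_i$. The information-flow graph is the directed graph $\mathcal{G}=(\mathcal{V},\mathcal{A})$ with $\mathcal{V}=\{1,\dots,n\}$ and an arc $(j\to i)\in\mathcal{A}$ iff $x_j\in\mathcal{W}_i$. An index code of length $\ell$ consists of an encoding function $E:\{0,1\}^{\sum_i q_i}\to\{0,1\}^\ell$ and, for each receiver $i$, a decoding function $D_i$ such that $D_i(E(x_1,\dots,x_n),x_i)$ equals the tuple of messages in $\mathcal{W}_i$ for all values of the messages. $\ell^*(\mathcal{G})$ denotes the minimum length of an index code. A leaf vertex is a vertex with no outgoing arcs; $\mathcal{L}(\mathcal{G})$ is the set of leaf vertices. A vertex $j$ is a predecessor of vertex $i$ iff there is a directed path in $\mathcal{G}$ from $j$ to $i$. *)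

(* Defs.v *)
From mathcomp Require Import all_boot.
From mathcomp Require Import boolp.
Set Implicit Arguments. Unset Strict Implicit. Unset Printing Implicit Defensive.

Section IndexCoding.
Variables (n : nat) (q : 'I_n -> nat) (W : 'I_n -> {set 'I_n}).

Definition msgs := {dffun forall i : 'I_n, (q i).-tuple bool}.

Definition ifg : rel 'I_n := fun j i => j \in W i.

(* Index code of length l: encoding E and decoders D_i; D_i outputs a
   candidate value for every message, only those in W_i must be correct. *)
Definition is_index_code (l : nat) (E : msgs -> l.-tuple bool)
  (D : forall i : 'I_n, l.-tuple bool -> (q i).-tuple bool ->
         forall j : 'I_n, (q j).-tuple bool) : Prop :=
  forall (x : msgs) (i j : 'I_n), j \in W i -> D i (E x) (x i) j = x j.

Definition has_index_code (l : nat) : Prop :=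
  exists E D, @is_index_code l E D.

Definition msgs0 : msgs := [ffun i => [tuple of nseq (q i) false]].

Lemma has_index_code_exists : exists l, `[< has_index_code l >].
Proof.
exists #|{: msgs}|; apply/asboolP.
exists (fun x => mktuple (fun k : 'I_#|{: msgs}| => k == enum_rank x)).
exists (fun i y _ j =>
  (match [pick k | tnth y k] with Some k => enum_val k | None => msgs0 end) j).
move=> x i j _.
case: pickP => [k|/(_ (enum_rank x))]; rewrite tnth_mktuple ?eqxx //.
by move/eqP=> ->; rewrite enum_rankK.
Qed.

Definition ell_star : nat := ex_minn has_index_code_exists.

Definition predecessor (j i : 'I_n) : bool :=
  [exists k, ifg j k && connect ifg k i].

Definition leaf (i : 'I_n) : bool := [forall k, ~~ ifg i k].

End IndexCoding.

(* Main.v *)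
Require Import Defs.
From mathcomp Require Import all_boot.
From mathcomp Require Import boolp.

Theorem lemma3 (n : nat) (q : 'I_n -> nat) (W : 'I_n -> {set 'I_n})
  (hq : forall i, 0 < q i) (hW : forall i, i \notin W i) :
  \sum_(i < n | [exists v, leaf W v && predecessor W i v]) q i
    <= ell_star q W.
Proof.
set P := fun i : 'I_n => [exists v, leaf W v && predecessor W i v].
rewrite /ell_star; case: ex_minnP => l /asboolP [E [D HD]] _.
pose F := fun i : 'I_n =>
  if P i then (predT : pred ((q i).-tuple bool)) else pred1 (msgs0 q i).
have key : {in family F &, injective E}.
  move=> x x' /familyP Hx /familyP Hx' hE.
  have out : forall j, ~~ P j -> x j = x' j.
    move=> j Pj; move: (Hx j) (Hx' j); rewrite /F (negbTE Pj) /=.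
    by move=> /eqP -> /eqP ->.
  have conn : forall v k, leaf W v -> connect (ifg W) k v -> x k = x' k.
    move=> v k Lv /connectP [p Hp Ev]; subst v.
    elim: p k Hp Lv => [|y p IH] k /=.
      move=> _ Lv; apply: out; apply/negP => /existsP [v /andP [_]].
      case/existsP => m /andP [Hkm _].
      by move/forallP: Lv => /(_ m); rewrite Hkm.
    case/andP => Hky Hp Lv.
    have Ey := IH y Hp Lv.
    by rewrite -(HD x y k Hky) -(HD x' y k Hky) hE Ey.
  apply/ffunP => i.
  case Pi: (P i); last by apply: out; rewrite Pi.
  case/existsP: Pi => v /andP [Lv /existsP [k /andP [Hik Hkv]]].
  have Ek := conn v k Lv Hkv.
  by rewrite -(HD x k i Hik) -(HD x' k i Hik) hE Ek.
have := @leq_card_in _ _ E _ key.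
rewrite card_family card_tuple card_bool.
have -> : foldr muln 1 [seq #|F x| | x : 'I_n] = 2 ^ (\sum_(i < n | P i) q i).
  rewrite expn_sum big_mkcond /= foldrE big_map big_enum /=.
  apply: eq_bigr => i _; rewrite /F; case: (P i) => /=; first by rewrite card_tuple card_bool.
  by rewrite card1.

by rewrite leq_exp2l.
Qed.
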